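(* The numbers $\operatorname{op}_{n,n-1}(123)$ satisfy $\operatorname{op}_{2,1}(123)=1$ and, for all $n>2$, $$\operatorname{op}_{n,n-1}(123) = \frac{(4n-6)(n-1)^2}{(n-2)^2(n+1)}\operatorname{op}_{n-1,n-2}(123).$$
   Context: An ordered set partition of $[n]$ into $k$ blocks is a sequence $B_1/B_2/\cdots/B_k$ of nonempty, pairwise disjoint subsets of $[n]$ whose union is $[n]$; the order of the blocks matters, but not the order of elements within a block. For a permutation $\rho=\rho_1\cdots\rho_m\in\mathcal{S}_m$, an ordered partition $B_1/\cdots/B_k$ contains $\rho$ if there are block indices $i_1<i_2<\cdots<i_m$ and elements $b_j\in B_{i_j}$ such that $b_1\cdots b_m$ is order-isomorphic to $\rho$ (i.e. $b_a<b_c$ iff $\rho_a<\rho_c$); otherwise it avoids $\rho$. $\operatorname{op}_{n,k}(\rho)$ denotes the number of ordered partitions of $[n]$ into $k$ blocks that avoid $\rho$. *)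

(* Defs.v *)
From mathcomp Require Import all_boot all_order all_algebra all_fingroup.
Set Implicit Arguments. Unset Strict Implicit. Unset Printing Implicit Defensive.

(* An ordered set partition of [n] = {0,..,n-1} (order-isomorphic to {1..n})
   into k blocks B_0/.../B_{k-1} is encoded by the block-assignment map
   f : 'I_n -> 'I_k, with B_i = f^{-1}(i); nonemptiness of every block is
   surjectivity of f. *)
Definition is_ordered_partition (n k : nat) (f : {ffun 'I_n -> 'I_k}) : bool :=
  [forall i : 'I_k, exists x : 'I_n, f x == i].

Definition contains_perm (n k m : nat) (rho : 'S_m) (f : {ffun 'I_n -> 'I_k}) : bool :=
  [exists b : {ffun 'I_m -> 'I_n},
    [forall a : 'I_m, forall c : 'I_m,
      ((a < c) ==> (f (b a) < f (b c))) && ((b a < b c) == (rho a < rho c))]].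

Definition avoids_perm (n k m : nat) (rho : 'S_m) (f : {ffun 'I_n -> 'I_k}) : bool :=
  ~~ contains_perm rho f.

Definition op (n k m : nat) (rho : 'S_m) : nat :=
  #|[set f : {ffun 'I_n -> 'I_k} | is_ordered_partition f && avoids_perm rho f]|.

Definition p123 : 'S_3 := 1%g.

(* Main.v *)
Require Import Defs.
From mathcomp Require Import all_boot all_order all_algebra all_fingroup.
From mathcomp Require Import zify ring lra.
Import GRing.Theory Num.Theory.

Fixpoint Fb (p q : nat) {struct p} : nat :=
  match p with
  | 0 => 1
  | p'.+1 => (fix G (q : nat) : nat :=
      match q with 0 => Fb p' 1 | q'.+1 => G q' + Fb p' q'.+2 end) q
  end.

Lemma Fb0 q : Fb 0 q = 1. Proof. by []. Qed.
Lemma FbS0 p : Fb p.+1 0 = Fb p 1. Proof. by []. Qed.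
Lemma FbSS p q : Fb p.+1 q.+1 = Fb p.+1 q + Fb p q.+2. Proof. by []. Qed.
Arguments Fb : simpl never.

Fixpoint ub (p q : nat) {struct p} : nat :=
  match p with
  | 0 => q
  | p'.+1 => (fix G (q : nat) : nat :=
      match q with 0 => ub p' 1 | q'.+1 => G q' + Fb p q'.+1 + Fb p q' + ub p' q'.+2 end) q
  end.

Lemma ub0 q : ub 0 q = q. Proof. by []. Qed.
Lemma ubS0 p : ub p.+1 0 = ub p 1. Proof. by []. Qed.
Lemma ubSS p q : ub p.+1 q.+1 = ub p.+1 q + Fb p.+1 q.+1 + Fb p.+1 q + ub p q.+2.
Proof. by []. Qed.
Arguments ub : simpl never.

Lemma Fb_sum p q : \sum_(j < p.+1) Fb j (p - j + q) = Fb p q.+1.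
Proof.
elim: p q => [|p IH] q; first by rewrite big_ord1.
rewrite big_ord_recr /= subnn add0n.
have -> : \sum_(i < p.+1) Fb (widen_ord (leqnSn p.+1) i) (p.+1 - widen_ord (leqnSn p.+1) i + q)
   = \sum_(i < p.+1) Fb i (p - i + q.+1).
  apply: eq_bigr => i _ /=; congr Fb; have := ltn_ord i; lia.
by rewrite IH FbSS addnC.
Qed.

Lemma Fb_rec p q : (0 < p + q)%N ->
  Fb p q = (if q is q'.+1 then Fb p q' else 0) + \sum_(j < p) Fb j (p.-1 - j + q).
Proof.
case: p => [|p] /=.
  by case: q => // q _; rewrite big_ord0.
move=> _; rewrite Fb_sum; case: q => [|q]; first by rewrite FbS0.
by rewrite FbSS.
Qed.

Lemma ub_sum p q : \sum_(j < p.+1) (Fb j.+1 (p - j + q) + ub j (p - j + q)) + Fb p q.+1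
   = ub p q.+1 + Fb p.+1 q.
Proof.
elim: p q => [|p IH] q.
  rewrite big_ord1 /= subnn add0n !ub0 !Fb0; lia.
rewrite big_ord_recr /= subnn add0n.
have -> : \sum_(i < p.+1) (Fb (widen_ord (leqnSn p.+1) i).+1 (p.+1 - widen_ord (leqnSn p.+1) i + q)
   + ub (widen_ord (leqnSn p.+1) i) (p.+1 - widen_ord (leqnSn p.+1) i + q))
   = \sum_(i < p.+1) (Fb i.+1 (p - i + q.+1) + ub i (p - i + q.+1)).
  apply: eq_bigr => i _ /=; have := ltn_ord i => h.
  have -> : (p.+1 - i + q = p - i + q.+1)%N by lia. by [].
have := IH q.+1; have := ubSS p q; have := FbSS p q; lia.
Qed.

Lemma ub_rec p q :
  ub p q = (if q is q'.+1 then Fb p q + ub p q' else 0)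
           + \sum_(j < p) (Fb j.+1 (p.-1 - j + q) + ub j (p.-1 - j + q)).
Proof.
case: p => [|p] /=.
  by rewrite big_ord0 addn0; case: q => // q; rewrite ub0.
have := ub_sum p q; case: q => [|q] /=.
  rewrite ubS0 FbS0; lia.
rewrite ubSS FbSS; lia.
Qed.

Lemma sorted_ltn_sort (L : seq nat) : uniq L -> sorted ltn (sort leq L).
Proof. by move=> uL; rewrite ltn_sorted_uniq_leq sort_uniq uL sort_sorted //; exact: leq_total. Qed.

Lemma perm_sortL (L : seq nat) : perm_eq (sort leq L) L.
Proof. by rewrite perm_sort. Qed.

Lemma rank_sum_sorted (s : seq nat) (G : nat -> nat) : sorted ltn s ->
  \sum_(x <- s) G (count (fun y => y < x) s) = \sum_(j < size s) G j.
Proof.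
elim: s G => [|y s IH] G /=; first by rewrite big_nil big_ord0.
move=> hp; have hs := path_sorted hp.
have hall : all (fun z => y < z) s by exact: (order_path_min ltn_trans hp).
rewrite big_cons big_ord_recl /= ltnn add0n.
have -> : count (fun y0 => y0 < y) s = 0.
  rewrite (eq_in_count (a2 := pred0)) ?count_pred0 //.
  by move=> z hz /=; move/allP: hall => /(_ z hz) h; apply/negbTE; rewrite -leqNgt ltnW.
congr (_ + _).
rewrite -(IH (fun j => G j.+1)) //.
apply: eq_big_seq => z hz; move/allP: hall => /(_ z hz) -> /=; by [].
Qed.

Lemma rank_sum (L : seq nat) (G : nat -> nat) : uniq L ->
  \sum_(x <- L) G (count (fun y => y < x) L) = \sum_(j < size L) G j.
Proof.
move=> uL; have pS := perm_sortL L.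
rewrite -(perm_size pS) -(@rank_sum_sorted _ G (@sorted_ltn_sort L uL)).
rewrite (perm_big _ pS); apply: eq_bigr => x _.
by move/seq.permP: pS => ->.
Qed.

Lemma max_count_sorted (s : seq nat) : sorted ltn s -> s != [::] ->
  count (fun x => all (fun y => y <= x) s) s = 1.
Proof.
elim: s => [|y s IH] //= hp _; have hs := path_sorted hp.
have hall : all (fun z => y < z) s by exact: (order_path_min ltn_trans hp).
case: s IH hp hs hall => [|z s] IH hp hs hall; first by rewrite /= leqnn.
have hzy : y < z by move: hall => /= /andP[].
rewrite /= leqnn /= leqNgt hzy /= add0n.
rewrite -(IH hs) //=; rewrite (ltnW hzy) /=; congr (_ + _).
apply: eq_in_count => x hx /=.
have hx' : x \in z :: s by rewrite inE hx orbT.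
by move/allP: hall => /(_ x hx') /ltnW ->.
Qed.

Lemma max_count (L : seq nat) : uniq L -> L != [::] ->
  count (fun x => all (fun y => y <= x) L) L = 1.
Proof.
move=> uL hL; have pS := perm_sortL L.
rewrite -(@max_count_sorted _ (@sorted_ltn_sort L uL)); last first.
  by rewrite -size_eq0 (perm_size pS) size_eq0.
move/seq.permP: (pS) => ->; apply: eq_count => x.
by apply: perm_all; rewrite perm_sym.
Qed.

Lemma beqP (b1 b2 : bool) : (b1 : nat) = b2 -> b1 = b2.
Proof. by case: b1; case: b2. Qed.

Lemma sum_bool_count (T : eqType) (s : seq T) (P : pred T) :
  \sum_(x <- s) (P x : nat) = count P s.
Proof. by elim: s => [|x s IH]; rewrite ?big_nil ?big_cons ?IH. Qed.

Lemma split_sum (M : seq nat) a b (H1 : nat -> nat) (c : nat) :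
  uniq M -> all (fun x => x <= b) M ->
  \sum_(x <- M) (if x <= a then H1 (count (fun y => y < x) M)
                 else (all (fun y => y <= x) M) * c)
  = \sum_(j < count (fun x => x <= a) M) H1 j
    + (0 < count (fun x => a < x <= b) M) * c.
Proof.
move=> uM aM.
rewrite (bigID (fun x => x <= a)) /=; congr (_ + _).
  rewrite -big_filter -size_filter -(@rank_sum _ H1 (filter_uniq _ uM)).
  apply: eq_big_seq => x; rewrite mem_filter => /andP[hx _]; rewrite hx.
  congr H1; rewrite count_filter; apply: eq_count => y /=.
  apply: beqP; lia.
rewrite -big_filter.
set Lm := filter _ M.
have uLm : uniq Lm by exact: filter_uniq.
rewrite (eq_big_seq (fun x => (all (fun y => y <= x) Lm) * c)); last first.
  move=> x; rewrite mem_filter => /andP[hx _]; rewrite (negbTE hx); congr (_ * _).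
  apply: f_equal; rewrite all_filter; move: hx; rewrite -ltnNge => hx.
  apply/allP/allP => h y hy; have := h y hy => /=; case: (leqP y a) => hya //= _.
  exact: leq_trans (ltnW hx).
rewrite -big_distrl /= sum_bool_count.
have -> : count (fun x => a < x <= b) M = size Lm.
  rewrite size_filter; apply: eq_in_count => y hy /=.
  move/allP: aM => /(_ y hy) hyb; apply: beqP; lia.
case: Lm uLm => [|z s] uLm; first by [].
by rewrite (@max_count _ uLm).
Qed.

Fixpoint alive (a b : nat) (w : seq nat) : bool :=
  if w is x :: w' then (x <= b) && (if x <= a then alive x b w' else alive a x w')
  else true.

Definition V a b (M : seq nat) := count (alive a b) (permutations M).

Lemma V_nil a b : V a b [::] = 1.
Proof. by []. Qed.

Lemma V_rec a b M : 0 < size M ->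
  V a b M = \sum_(x <- undup M)
              ((x <= b) * (if x <= a then V x b (rem x M) else V a x (rem x M))).
Proof.
move=> hM; rewrite /V (seq.permP (permutationsE hM)).
rewrite /allpairs_dep count_flatten sumnE !big_map; apply: eq_bigr => x _.
rewrite count_map; set P := permutations _.
have -> : count (preim (cons x) (alive a b)) P
   = count (fun t => (x <= b) && (if x <= a then alive x b t else alive a x t)) P.
  by apply: eq_count.
case: (x <= b); last by rewrite mul0n; elim: P.
by rewrite mul1n; case: (x <= a).
Qed.

Lemma count_add_in (M : seq nat) (P1 P2 Q1 Q2 Q3 : pred nat) :
  {in M, forall y, P1 y + P2 y = Q1 y + Q2 y + Q3 y} ->
  count P1 M + count P2 M = count Q1 M + count Q2 M + count Q3 M.
Proof.
elim: M => [|y M IH] //= h.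
have h1 := h y (mem_head _ _).
have := IH (fun z hz => h z (@mem_behead _ (y :: M) _ hz)); lia.
Qed.

Lemma count_rem (M : seq nat) x (P : pred nat) : uniq M ->
  count P (rem x M) = count (fun y => P y && (y != x)) M.
Proof. by move=> uM; rewrite rem_filter // count_filter. Qed.

Lemma all_rem (M : seq nat) x (P : pred nat) : all P M -> all P (rem x M).
Proof. by move/allP=> h; apply/allP => y /mem_rem /h. Qed.

Lemma cnt1 (M : seq nat) x : uniq M -> x \in M -> count (fun y => y == x) M = 1.
Proof. by move=> uM hx; have := count_uniq_mem x uM; rewrite hx. Qed.

Definition Hyps (S : seq nat) (a b x : nat) :=
  [/\ uniq S, x \in S, all (fun y => y <= b) S & a <= b].

Lemma cL1 S a b x : Hyps S a b x -> x <= a ->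
  count (fun y => y <= x) (rem x S) = count (fun y => y < x) S.
Proof. by case=> uS hx aS hab hxa; rewrite count_rem //; apply: eq_count => y /=; apply: beqP; lia. Qed.

Lemma cL2 S a b x : Hyps S a b x -> x <= a ->
  let p := count (fun y => y <= a) S in let q := count (fun y => a < y <= b) S in
  count (fun y => x < y <= b) (rem x S) = p.-1 - count (fun y => y < x) S + q
  /\ count (fun y => x < y <= b) S = p.-1 - count (fun y => y < x) S + q.
Proof.
case=> uS hx aS hab hxa p q.
have H : p + q = count (fun y => y < x) S + count (fun y => y == x) S
                 + count (fun y => (x < y <= b) && (y != x)) S.
  apply: count_add_in => y hy /=; move/allP: aS => /(_ y hy) /= hyb; lia.
have H2 : p + count pred0 S = count (fun y => y < x) S + count (fun y => y == x) S
                 + count (fun y => (x < y <= a) && (y != x)) S.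
  apply: count_add_in => y hy /=; lia.
have H3 : count (fun y => x < y <= b) S = count (fun y => (x < y <= b) && (y != x)) S.
  by apply: eq_count => y /=; apply: beqP; lia.
rewrite count_rem // H3.
move: H H2; rewrite (@cnt1 S x uS hx) count_pred0; clearbody p q; clear; lia.
Qed.

Lemma cL3 S a b x : Hyps S a b x -> x <= a ->
  count (fun y => y <= x) S = (count (fun y => y < x) S).+1.
Proof.
case=> uS hx aS hab hxa.
have H : count (fun y => y <= x) S + count pred0 S = count (fun y => y < x) S
     + count (fun y => y == x) S + count pred0 S.
  apply: count_add_in => y hy /=; lia.
move: H; rewrite (@cnt1 S x uS hx) count_pred0; clear; lia.
Qed.

Lemma cL4 S a b x : Hyps S a b x -> a < x ->
  count (fun y => y <= a) (rem x S) = count (fun y => y <= a) S.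
Proof. by case=> uS hx aS hab hxa; rewrite count_rem //; apply: eq_count => y /=; apply: beqP; lia. Qed.

Lemma cL6 S a b x : Hyps S a b x ->
  all (fun y => y <= x) (rem x S) = all (fun y => y <= x) S.
Proof. by case=> uS hx aS hab; rewrite rem_filter // all_filter; apply: eq_in_all => y _ /=; apply: beqP; lia. Qed.

Lemma cL5 S a b x : Hyps S a b x -> a < x -> all (fun y => y <= x) S ->
  let q := count (fun y => a < y <= b) S in
  count (fun y => a < y <= x) (rem x S) = q.-1 /\ count (fun y => a < y <= x) S = q.
Proof.
case=> uS hx aS hab hxa hxS q.
have H : q + count pred0 S = count (fun y => (a < y <= x) && (y != x)) S
     + count (fun y => y == x) S + count pred0 S.
  apply: count_add_in => y hy /=; move/allP: aS => /(_ y hy) /= hyb.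
  move/allP: hxS => /(_ y hy) /= hyx; lia.
have H2 : q = count (fun y => a < y <= x) S.
  apply: eq_in_count => y hy /=; move/allP: aS => /(_ y hy) /= hyb.
  move/allP: hxS => /(_ y hy) /= hyx; apply: beqP; lia.
rewrite count_rem //; move: H; rewrite (@cnt1 S x uS hx) count_pred0 -H2; clearbody q; clear; split; lia.
Qed.

Lemma V_uniq n : forall M a b, size M = n -> a <= b -> uniq M ->
  V a b M = if all (fun x => x <= b) M
            then Fb (count (fun x => x <= a) M) (count (fun x => a < x <= b) M)
            else 0.
Proof.
elim: n => [|n IH] M a b hs hab uM.
  by move/size0nil: hs => ->; rewrite V_nil.
rewrite V_rec; last by rewrite hs.
rewrite (undup_id uM).
have IHx : forall x a' b', x \in M -> a' <= b' ->
    V a' b' (rem x M) = if all (fun y => y <= b') (rem x M)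
            then Fb (count (fun y => y <= a') (rem x M)) (count (fun y => a' < y <= b') (rem x M))
            else 0.
  by move=> x a' b' hx hab'; apply: IH => //; [rewrite size_rem // hs | exact: rem_uniq].
case: ifP => aM; last first.
  move/negbT: aM => /allPn[y hy hyb]; rewrite -ltnNge in hyb.
  apply: big1_seq => x /andP[_ hx].
  case: (leqP x b) => hxb; last by rewrite mul0n.
  have hyr : y \in rem x M by rewrite (mem_rem_uniq _ uM) !inE hy andbT; apply/eqP => e; subst; lia.
  have nall : forall b', b' <= b -> all (fun z => z <= b') (rem x M) = false.
    move=> b' hb'; apply/negbTE/allPn; exists y => //; rewrite -ltnNge; lia.
  case: (leqP x a) => hxa.
    by rewrite IHx // nall.
  by rewrite IHx ?nall // ltnW.
set p := count (fun x => x <= a) M; set q := count (fun x => a < x <= b) M.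
have hpq : 0 < p + q.
  have : p + q = size M.
    rewrite -count_predT /p /q; have := @count_add_in M (fun x => x <= a) (fun x => a < x <= b)
       predT pred0 pred0; rewrite count_pred0 !addn0; apply => y hy /=.
    move/allP: aM => /(_ y hy) /= hyb; lia.
  by rewrite hs => ->.
rewrite (@Fb_rec p q hpq).
have E := @split_sum M a b (fun j => Fb j (p.-1 - j + q)) (Fb p q.-1) uM aM.
rewrite /= -/p -/q in E.
have eq0 : forall r, (if r is r'.+1 then Fb p r' else 0) = (0 < r) * Fb p r.-1 by case=> [|r]; rewrite /= ?mul1n.
rewrite eq0.
rewrite addnC -E.
apply: eq_big_seq => x hx.
have hxb : x <= b by move/allP: aM => /(_ x hx).
rewrite hxb mul1n.
have hH : Hyps M a b x by split.
case: (leqP x a) => hxa.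
  have [c2a _] := @cL2 _ _ _ _ hH hxa.
  by rewrite IHx // all_rem // (@cL1 _ _ _ _ hH) // c2a.
rewrite (IHx x a x hx (ltnW hxa)) (@cL6 _ _ _ _ hH).
case: ifP => hxM; last by rewrite mul0n.
have [c5a c5b] := @cL5 _ _ _ _ hH hxa hxM.
by rewrite (@cL4 _ _ _ _ hH) // c5a mul1n.
Qed.


Definition U a b (S : seq nat) := \sum_(d <- S) V a b (d :: S).

Lemma U_step a b S : uniq S ->
  U a b S = \sum_(x <- S) ((x <= b) *
     (if x <= a then V x b S + U x b (rem x S) else V a x S + U a x (rem x S))).
Proof.
move=> uS; rewrite /U.
transitivity (\sum_(d <- S) \sum_(x <- S)
    ((x <= b) * (if x <= a then V x b (rem x (d :: S)) else V a x (rem x (d :: S))))).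
  apply: eq_big_seq => d hd; rewrite V_rec //= hd (undup_id uS) //.
rewrite exchange_big; apply: eq_big_seq => x hx.
rewrite -big_distrr /=; congr (_ * _).
have E : forall W : seq nat -> nat,
    \sum_(d <- S) W (rem x (d :: S)) = W S + \sum_(d <- rem x S) W (d :: rem x S).
  move=> W; rewrite (bigD1_seq x) //= eqxx; congr (_ + _).
  rewrite (rem_filter x uS) big_filter; apply: eq_bigr => d hd /=.
  by rewrite (negbTE hd).
by case: (x <= a); rewrite E.
Qed.

Lemma U_uniq n : forall S a b, size S = n -> a <= b -> uniq S ->
  U a b S = if all (fun x => x <= b) S
            then ub (count (fun x => x <= a) S) (count (fun x => a < x <= b) S)
            else 0.
Proof.
elim: n => [|n IH] S a b hs hab uS.
  by move/size0nil: hs => ->; rewrite /U big_nil.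
rewrite U_step //.
have IHx : forall x a' b', x \in S -> a' <= b' ->
    U a' b' (rem x S) = if all (fun y => y <= b') (rem x S)
            then ub (count (fun y => y <= a') (rem x S)) (count (fun y => a' < y <= b') (rem x S))
            else 0.
  by move=> x a' b' hx hab'; apply: IH => //; [rewrite size_rem // hs | exact: rem_uniq].
have VS : forall a' b', a' <= b' -> V a' b' S = if all (fun y => y <= b') S
            then Fb (count (fun y => y <= a') S) (count (fun y => a' < y <= b') S)
            else 0.
  by move=> a' b' hab'; apply: (@V_uniq (size S)).
case: ifP => aS; last first.
  move/negbT: aS => /allPn[y hy hyb]; rewrite -ltnNge in hyb.
  apply: big1_seq => x /andP[_ hx].
  case: (leqP x b) => hxb; last by rewrite mul0n.
  have hyr : y \in rem x S by rewrite (mem_rem_uniq _ uS) !inE hy andbT; apply/eqP => e; subst; lia.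
  have nall : forall b', b' <= b -> all (fun z => z <= b') (rem x S) = false.
    move=> b' hb'; apply/negbTE/allPn; exists y => //; rewrite -ltnNge; lia.
  have nallS : forall b', b' <= b -> all (fun z => z <= b') S = false.
    move=> b' hb'; apply/negbTE/allPn; exists y => //; rewrite -ltnNge; lia.
  case: (leqP x a) => hxa.
    by rewrite IHx // nall // VS // nallS.
  by rewrite IHx ?nall // ?VS ?nallS // ltnW.
set p := count (fun x => x <= a) S; set q := count (fun x => a < x <= b) S.
rewrite ub_rec.
have E := @split_sum S a b (fun j => Fb j.+1 (p.-1 - j + q) + ub j (p.-1 - j + q))
   (Fb p q + ub p q.-1) uS aS.
rewrite /= -/p -/q in E.
have eq0 : forall r, (if r is r'.+1 then Fb p r + ub p r' else 0) = (0 < r) * (Fb p r + ub p r.-1)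
  by case=> [|r]; rewrite /= ?mul1n.
rewrite eq0 addnC -E.
apply: eq_big_seq => x hx.
have hxb : x <= b by move/allP: aS => /(_ x hx).
rewrite hxb mul1n.
have hH : Hyps S a b x by split.
case: (leqP x a) => hxa.
  have [c2a c2b] := @cL2 _ _ _ _ hH hxa.
  rewrite IHx // all_rem // VS ?(leq_trans hxa) // aS.
  by rewrite (@cL1 _ _ _ _ hH) // c2a (@cL3 _ _ _ _ hH) // c2b.
rewrite (IHx x a x hx (ltnW hxa)) (VS a x (ltnW hxa)) (@cL6 _ _ _ _ hH).
case: ifP => hxS; last by rewrite mul0n.
have [c5a c5b] := @cL5 _ _ _ _ hH hxa hxS.
by rewrite (@cL4 _ _ _ _ hH) // c5a c5b mul1n.
Qed.

Fixpoint inc2 (lo : nat) (w : seq nat) : bool :=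
  if w is x :: w' then ((lo < x) && has (fun y => x < y) w') || inc2 lo w' else false.

Fixpoint inc3 (w : seq nat) : bool :=
  if w is x :: w' then inc2 x w' || inc3 w' else false.

Lemma inc2_mono lo lo' w : lo' <= lo -> inc2 lo w -> inc2 lo' w.
Proof.
move=> h; elim: w => [|x w IH] //= /orP[/andP[h1 h2]|/IH ->]; last by rewrite orbT.
by rewrite (leq_ltn_trans h h1) h2.
Qed.

Lemma inc2_has lo w : inc2 lo w -> has (fun y => lo < y) w.
Proof.
elim: w => [|x w IH] //= /orP[/andP[h1 h2]|/IH ->]; last by rewrite orbT.
by rewrite h1.
Qed.

Lemma alive_char a b w : a <= b ->
  alive a b w = [&& all (fun y => y <= b) w, ~~ inc2 a w & ~~ inc3 w].
Proof.
elim: w a b => [|x w IH] a b hab //=.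
case: (leqP x a) => hxa.
  rewrite (leq_trans hxa hab) /= IH; last exact: leq_trans hxa hab.
  case: (inc2 x w) (@inc2_mono a x w hxa) => /=; first by rewrite !andbF.
  by case: (inc2 a w) => // /(_ isT).
rewrite IH; last exact: ltnW.
case hxb: (x <= b) => //=.
case hall: (all (fun y => y <= x) w) => /=.
  have hallb : all (fun y => y <= b) w.
    by apply/allP => y /(allP hall) /= h; exact: leq_trans h hxb.
  have hnh : has (fun y => x < y) w = false.
    by apply/negbTE/hasPn => y /(allP hall) /=; rewrite -leqNgt.
  have hn2 : inc2 x w = false.
    by apply/negbTE; apply: contraFN hnh => /inc2_has.
  by rewrite hallb hnh hn2 /=.
have hh : has (fun y => x < y) w.
  by apply/hasP; move/negbT: hall => /allPn[y hy]; rewrite -ltnNge => h; exists y.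
by rewrite hh /= andbF.
Qed.

Lemma inc2P lo w : reflect (exists i j, [/\ i < j, j < size w, lo < nth 0 w i
                                           & nth 0 w i < nth 0 w j]) (inc2 lo w).
Proof.
elim: w => [|x w IH] /=.
  by apply: ReflectF => -[i [j [_ hj _ _]]].
apply: (iffP orP).
  case => [/andP[h1 /hasP[y hy hxy]] | /IH[i [j [hij hj h1 h2]]]].
    exists 0, (index y w).+1; split => //=; first by rewrite ltnS index_mem.
    by rewrite nth_index.
  by exists i.+1, j.+1; split.
case=> [[|i] [[|j] [hij hj h1 h2]]] //=.
  left; rewrite h1 /=; apply/hasP; exists (nth 0 w j) => //.
  by apply: mem_nth.
by right; apply/IH; exists i, j; split.
Qed.

Lemma inc3P w : reflect (exists i j l, [/\ i < j, j < l, l < size w,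
          nth 0 w i < nth 0 w j & nth 0 w j < nth 0 w l]) (inc3 w).
Proof.
elim: w => [|x w IH] /=.
  by apply: ReflectF => -[i [j [l [_ _ hl _ _]]]].
apply: (iffP orP).
  case => [/inc2P[i [j [hij hj h1 h2]]] | /IH[i [j [l [hij hjl hl h1 h2]]]]].
    by exists 0, i.+1, j.+1; split.
  by exists i.+1, j.+1, l.+1; split.
case=> [[|i] [[|j] [[|l] [hij hjl hl h1 h2]]]] //=.
  by left; apply/inc2P; exists j, l; split.
by right; apply/IH; exists i, j, l; split.
Qed.

Definition word n k (f : {ffun 'I_n -> 'I_k}) : seq nat := [seq (f i : nat) | i <- enum 'I_n].
Arguments word {n k}.

Lemma size_word {n k} (f : {ffun 'I_n -> 'I_k}) : size (word f) = n.
Proof. by rewrite size_map size_enum_ord. Qed.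

Lemma nth_word {n k} (f : {ffun 'I_n -> 'I_k}) (i : 'I_n) : nth 0 (word f) i = f i.
Proof. by rewrite (nth_map i) ?size_enum_ord // nth_ord_enum. Qed.

Lemma word_lt {n k} (f : {ffun 'I_n -> 'I_k}) : all (fun y => y < k) (word f).
Proof. by apply/allP => y /mapP[i _ ->]. Qed.

Lemma contains_inc3 {n k} (f : {ffun 'I_n -> 'I_k}) : contains_perm p123 f = inc3 (word f).
Proof.
apply/existsP/inc3P.
  move=> [bb /forallP H].
  have H' : forall a c : 'I_3, a < c -> f (bb a) < f (bb c) /\ bb a < bb c.
    move=> a c hac; have /forallP/(_ c)/andP[h1 /eqP h2] := H a.
    rewrite /p123 !perm1 hac in h1 h2; split; first exact: h1.
    by rewrite h2.
  have [h01 h01'] := H' (@Ordinal 3 0 isT) (@Ordinal 3 1 isT) isT.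
  have [h12 h12'] := H' (@Ordinal 3 1 isT) (@Ordinal 3 2 isT) isT.
  exists (bb (@Ordinal 3 0 isT)), (bb (@Ordinal 3 1 isT)), (bb (@Ordinal 3 2 isT)).
  by rewrite size_word !nth_word; split.
move=> [i [j [l [hij hjl hl h1 h2]]]].
rewrite size_word in hl.
have hj : j < n by lia.
have hi : i < n by lia.
pose I := Ordinal hi; pose J := Ordinal hj; pose L := Ordinal hl.
exists [ffun t : 'I_3 => nth I [:: I; J; L] t].
have e1 : nth 0 (word f) i = f I by rewrite -nth_word.
have e2 : nth 0 (word f) j = f J by rewrite -nth_word.
have e3 : nth 0 (word f) l = f L by rewrite -nth_word.
rewrite e1 e2 e3 in h1 h2.
apply/forallP => a; apply/forallP => c; rewrite /p123 !perm1 !ffunE.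
case: a => [[|[|[|a]]] ha] //; case: c => [[|[|[|c]]] hc] //=; rewrite ?ltnn //=.
all: rewrite ?h1 ?h2 ?(ltn_trans h1 h2) /=.
all: apply/eqP; apply: beqP; lia.
Qed.

Lemma surj_word {n k} (f : {ffun 'I_n -> 'I_k}) :
  is_ordered_partition f = all (fun j => j \in word f) (iota 0 k).
Proof.
apply/forallP/allP.
  move=> H j; rewrite mem_iota add0n => /andP[_ hj].
  have /existsP[x /eqP hx] := H (Ordinal hj).
  by apply/mapP; exists x; rewrite ?mem_enum // hx.
move=> H i; apply/existsP.
have /H /mapP[x _ hx] : (i : nat) \in iota 0 k by rewrite mem_iota add0n ltn_ord.
by exists x; apply/eqP/val_inj.
Qed.

Lemma word_inj {n k} : injective (@word n k).
Proof.
move=> f g h; apply/ffunP => i; apply/eqP.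
by rewrite -val_eqE /= -nth_word -(nth_word g) h.
Qed.

Lemma perm_extract (s t : seq nat) : uniq s -> {subset s <= t} ->
  exists r, perm_eq t (s ++ r).
Proof.
elim: s t => [|x s IH] t /=; first by exists t.
move=> /andP[hxs us] sub.
have hx : x \in t by apply: sub; rewrite mem_head.
have pt := perm_to_rem hx.
have sub' : {subset s <= rem x t}.
  move=> y hy; have : y \in t by apply: sub; rewrite inE hy orbT.
  rewrite (perm_mem pt) inE => /orP[/eqP e|//].
  by subst; rewrite hy in hxs.
have [r hr] := IH _ us sub'.
by exists r; rewrite (perm_trans pt) // perm_cons.
Qed.

Lemma uniq_flat k (D : seq nat) : uniq D ->
  uniq (flatten [seq permutations (d :: iota 0 k) | d <- D]).
Proof.
elim: D => [|d D IH] //= /andP[hdD uD].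
rewrite cat_uniq permutations_uniq IH // andbT.
apply/hasPn => t ht; apply/negP => hin.
move/seq.flattenP: ht => [ts /mapP[d' hd' e] ht']; subst ts.
have h1 : perm_eq t (d :: iota 0 k) by rewrite -mem_permutations.
have h2 : perm_eq t (d' :: iota 0 k) by rewrite -mem_permutations.
have hp : perm_eq (d :: iota 0 k) (d' :: iota 0 k) by rewrite -(permPl h1) h2.
move/seq.permP: hp => /(_ (pred1 d)) /=.
rewrite eqxx; case: eqP => [e|_]; first by subst; rewrite hd' in hdD.
by rewrite add0n add1n => /eqP; rewrite eqn_leq ltnn.
Qed.

Lemma avoid_alive {n k} (f : {ffun 'I_n -> 'I_k}) :
  avoids_perm p123 f = alive k k (word f).
Proof.
rewrite /avoids_perm contains_inc3 alive_char //.
have hall : all (fun y => y <= k) (word f).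
  by apply/allP => y /(allP (word_lt f)) /ltnW.
have hn2 : inc2 k (word f) = false.
  apply/negbTE/negP => /inc2_has /hasP[y /(allP (word_lt f)) hy hky].
  by move: (ltn_trans hy hky); rewrite ltnn.
by rewrite hall hn2.
Qed.

Lemma card_count (T : finType) (P : pred T) : #|[set x | P x]| = count P (enum T).
Proof.
rewrite cardE enumT -size_filter; congr size.
by apply: eq_filter => x; rewrite /= inE.
Qed.

Lemma op_U k : op k.+1 k p123 = U k k (iota 0 k).
Proof.
rewrite /op.
set Q := fun w : seq nat => all (fun j => j \in w) (iota 0 k) && alive k k w.
have -> : #|[set f : {ffun 'I_k.+1 -> 'I_k} | is_ordered_partition f && avoids_perm p123 f]|
   = count Q (map word (enum {ffun 'I_k.+1 -> 'I_k})).
  rewrite count_map (@card_count _ (fun f : {ffun 'I_k.+1 -> 'I_k} =>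
       is_ordered_partition f && avoids_perm p123 f)).
  by apply: eq_count => f; rewrite /Q /= surj_word avoid_alive.
set W := map word _.
have -> : count Q W = count (alive k k) [seq w <- W | all (fun j => j \in w) (iota 0 k)].
  by rewrite count_filter; apply: eq_count => w; rewrite /Q /= andbC.
pose FL := flatten [seq permutations (d :: iota 0 k) | d <- iota 0 k].
have pe : perm_eq [seq w <- W | all (fun j => j \in w) (iota 0 k)] FL.
  apply: uniq_perm.
  - by apply: filter_uniq; rewrite map_inj_uniq ?enum_uniq //; exact: word_inj.
  - by apply: uniq_flat; exact: iota_uniq.
  move=> t; apply/idP/idP.
    rewrite mem_filter => /andP[hs /mapP[f _ ht]]; subst t.
    have [r hr] : exists r, perm_eq (word f) (iota 0 k ++ r).
      by apply: perm_extract; [exact: iota_uniq | move=> j hj; exact: (allP hs j hj)].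
    have := perm_size hr; rewrite size_cat size_iota size_word.
    case: r hr => [|d [|e r]] hr /= hsz; [lia | | lia].
    have hd : d \in word f by rewrite (perm_mem hr) mem_cat mem_head orbT.
    have hdk : d < k by move: (allP (word_lt f) d hd).
    apply/seq.flattenP; exists (permutations (d :: iota 0 k)).
      by apply/mapP; exists d; rewrite // mem_iota.
    by rewrite mem_permutations (permPl hr) perm_catC.
  move/seq.flattenP => [ts /mapP[d hd ->]].
  rewrite mem_permutations => ht.
  rewrite mem_iota add0n in hd.
  have hlt : forall y, y \in t -> y < k.
    move=> y; rewrite (perm_mem ht) inE mem_iota add0n => /orP[/eqP ->|/andP[_ //]] //.
  have hsz : size t = k.+1 by rewrite (perm_size ht) /= size_iota.
  rewrite mem_filter; apply/andP; split.
    by apply/allP => j hj; rewrite (perm_mem ht) inE hj orbT.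
  have Hlt : forall i : 'I_k.+1, nth 0 t i < k.
    by move=> i; apply: hlt; apply: mem_nth; rewrite hsz ltn_ord.
  apply/mapP; exists [ffun i => Ordinal (Hlt i)]; first by rewrite mem_enum.
  apply: (@eq_from_nth _ 0); first by rewrite size_word hsz.
  move=> i hi; rewrite hsz in hi.
  by rewrite (nth_word _ (Ordinal hi)) ffunE.
rewrite (seq.permP pe) /FL count_flatten sumnE !big_map /U.
by apply: eq_bigr.
Qed.

Lemma op_ub k : op k.+1 k p123 = ub k 0.
Proof.
rewrite op_U (@U_uniq k _ k k) ?size_iota ?iota_uniq //.
have -> : all (fun x => x <= k) (iota 0 k).
  by apply/allP => x; rewrite mem_iota add0n => /andP[_ /ltnW].
have -> : count (fun x => x <= k) (iota 0 k) = k.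
  rewrite -[RHS](size_iota 0 k) -count_predT; apply: eq_in_count => x.
  by rewrite mem_iota add0n => /andP[_ /ltnW ->].
have -> : count (fun x => k < x <= k) (iota 0 k) = 0.
  rewrite (@eq_in_count _ _ pred0) ?count_pred0 // => x _ /=.
  by case: ltngtP.
by [].
Qed.

Local Open Scope ring_scope.

Definition fr (n : nat) : rat := (n`!)%:R.
Lemma fr_neq0 n : fr n != 0. Proof. by rewrite /fr pnatr_eq0 -lt0n fact_gt0. Qed.
Lemma frE n m : n = m.+1 -> fr n = n%:R * fr m.
Proof. by move=> ->; rewrite /fr factS natrM. Qed.
Lemma nS_neq0 n : (n.+1)%:R != 0 :> rat. Proof. by rewrite pnatr_eq0. Qed.

Definition Fc (p q : nat) : rat :=
  fr (2 * p + q)%N / (fr p * fr (p + q)%N) * (q.+1)%:R / ((p + q)%N.+1)%:R.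

Lemma Fc0 q : Fc 0 q = 1.
Proof.
rewrite /Fc muln0 !add0n /fr fact0.
have hq : 0 <= q%:R :> rat by apply: ler0n.
have hf : 0 < q`!%:R :> rat by rewrite ltr0n fact_gt0.
field; repeat (apply/andP; split); apply: lt0r_neq0; lra.
Qed.

Lemma fr_gt0 n : 0 < fr n. Proof. by rewrite /fr ltr0n fact_gt0. Qed.
Lemma n_ge0 n : 0 <= n%:R :> rat. Proof. exact: ler0n. Qed.

Ltac nzs := repeat (apply/andP; split); apply: lt0r_neq0; lra.

Lemma Fc_S0 p : Fc p.+1 0 = Fc p 1.
Proof.
rewrite /Fc.
rewrite (frE (2 * p.+1 + 0) (2 * p + 1)); last lia.
rewrite (frE (2 * p + 1) (2 * p)); last lia.
rewrite (frE (p.+1 + 0) p); last lia.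
rewrite (frE (p + 1) p); last lia.
rewrite (frE (p.+1) p); last lia.
have := fr_gt0 p; have := fr_gt0 (2 * p); have := n_ge0 p => *.
field; nzs.
Qed.

Lemma frQ n m : n = m -> fr n = fr m. Proof. by move=> ->. Qed.

Lemma Fc_SS p q : Fc p.+1 q.+1 = Fc p.+1 q + Fc p q.+2.
Proof.
rewrite /Fc.
rewrite (frE (2 * p.+1 + q.+1) (2 * p + q + 2)); last lia.
rewrite (frQ (2 * p.+1 + q) (2 * p + q + 2)); last lia.
rewrite (frQ (2 * p + q.+2) (2 * p + q + 2)); last lia.
rewrite (frE (p.+1) p); last lia.
rewrite (frE (p.+1 + q.+1) (p + q + 1)); last lia.
rewrite (frQ (p.+1 + q) (p + q + 1)); last lia.
rewrite (frE (p + q.+2) (p + q + 1)); last lia.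
have := fr_gt0 p; have := fr_gt0 (2 * p + q + 2); have := fr_gt0 (p + q + 1);
have := n_ge0 p; have := n_ge0 q => *.
field; nzs.
Qed.

Lemma Fb_Fc p q : (Fb p q)%:R = Fc p q.
Proof.
elim: p q => [|p IH] q; first by rewrite Fb0 Fc0.
elim: q => [|q IHq]; first by rewrite FbS0 IH Fc_S0.
by rewrite FbSS natrD IHq IH Fc_SS.
Qed.

Definition Mp (p q : nat) : rat :=
  let P := p%:R in let Q := q%:R in
  2*Q + 3*Q^+2 + Q^+3 + 8*P*Q + 8*P*Q^+2 + 2*P*Q^+3 + 3*P^+2 + 10*P^+2*Q
  + 5*P^+2*Q^+2 + 3*P^+3 + 3*P^+3*Q.

Definition uc (p q : nat) : rat :=
  fr (2 * p + q)%N / (fr p * fr (p + q)%N) * Mp p q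
    / ((p.+1)%:R * ((p + q)%N.+1)%:R * ((p + q)%N.+2)%:R).

Lemma uc0 q : uc 0 q = q%:R.
Proof.
rewrite /uc /Mp muln0 !add0n /fr fact0.
have := fr_gt0 q; have := n_ge0 q; rewrite /fr => *.
field; nzs.
Qed.

Lemma uc_S0 p : uc p.+1 0 = uc p 1.
Proof.
rewrite /uc /Mp.
rewrite (frE (2 * p.+1 + 0) (2 * p + 1)); last lia.
rewrite (frE (2 * p + 1) (2 * p)); last lia.
rewrite (frE (p.+1 + 0) p); last lia.
rewrite (frE (p + 1) p); last lia.
rewrite (frE (p.+1) p); last lia.
have := fr_gt0 p; have := fr_gt0 (2 * p); have := n_ge0 p => *.
field; nzs.
Qed.

Lemma uc_SS p q : uc p.+1 q.+1 = uc p.+1 q + Fc p.+1 q.+1 + Fc p.+1 q + uc p q.+2.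
Proof.
rewrite /uc /Fc /Mp.
rewrite (frE (2 * p.+1 + q.+1) (2 * p + q + 2)); last lia.
rewrite (frQ (2 * p.+1 + q) (2 * p + q + 2)); last lia.
rewrite (frQ (2 * p + q.+2) (2 * p + q + 2)); last lia.
rewrite (frE (p.+1) p); last lia.
rewrite (frE (p.+1 + q.+1) (p + q + 1)); last lia.
rewrite (frQ (p.+1 + q) (p + q + 1)); last lia.
rewrite (frE (p + q.+2) (p + q + 1)); last lia.
have := fr_gt0 p; have := fr_gt0 (2 * p + q + 2); have := fr_gt0 (p + q + 1);
have := n_ge0 p; have := n_ge0 q => *.
field; nzs.
Qed.

Lemma ub_uc p q : (ub p q)%:R = uc p q.
Proof.
elim: p q => [|p IH] q; first by rewrite ub0 uc0.
elim: q => [|q IHq]; first by rewrite ubS0 IH uc_S0.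
rewrite ubSS !natrD IHq IH !Fb_Fc uc_SS Fc_SS; ring.
Qed.

Lemma final_arith n m : n = m.+2 -> (1 <= m)%N ->
  (ub m.+1 0)%:R =
       ((4 * n - 6)%:R * (n - 1)%:R ^+ 2) / ((n - 2)%:R ^+ 2 * (n + 1)%:R)
       * (ub m 0)%:R :> rat.
Proof.
move=> -> hm.
rewrite !ub_uc /uc /Mp.
rewrite (_ : (4 * m.+2 - 6 = 4 * m + 2)%N); last lia.
rewrite (_ : (m.+2 - 1 = m.+1)%N); last lia.
rewrite (_ : (m.+2 - 2 = m)%N); last lia.
rewrite (frE (2 * m.+1 + 0) (2 * m + 1)); last lia.
rewrite (frE (2 * m + 1) (2 * m)); last lia.
rewrite (frE (m.+1 + 0) m); last lia.
rewrite (frE (m.+1) m); last lia.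
rewrite (frQ (2 * m + 0) (2 * m)); last lia.
rewrite (frQ (m + 0) m); last lia.
have hm' : 1 <= m%:R :> rat by rewrite ler1n.
have := fr_gt0 m; have := fr_gt0 (2 * m) => *.
field; nzs.
Qed.


Theorem theorem5 :
  op 2 1 p123 = 1%N /\
  (forall n : nat, (2 < n)%N ->
     (op n (n - 1) p123)%:R =
       ((4 * n - 6)%:R * (n - 1)%:R ^+ 2) / ((n - 2)%:R ^+ 2 * (n + 1)%:R)
       * (op (n - 1) (n - 2) p123)%:R :> rat).
Proof.
split; first by rewrite op_ub.
move=> n hn.
have [m [hm hm1]] : exists m, n = m.+2 /\ (1 <= m)%N.
  by exists (n - 2)%N; split; lia.
have f1 : (n - 1 = m.+1)%N by lia.
have f2 : (n - 2 = m)%N by lia.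
have e1 : op n (n - 1) p123 = ub m.+1 0 by rewrite f1 hm op_ub.
have e2 : op (n - 1) (n - 2) p123 = ub m 0 by rewrite f1 f2 op_ub.
by rewrite e1 e2; apply: final_arith.
Qed.
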